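(* Let $I\subseteq\mathbb{R}$ be an interval, let $f:I\to\mathbb{R}$ be differentiable on the interior $I^{\circ}$ of $I$, let $a,b\in I^{\circ}$ with $a<b$, assume $f'\in L[a,b]$, and let $\alpha,\lambda\in[0,1]$. Suppose that $|f'|^{q}$ is $s$-convex on $[a,b]$ for some fixed $s\in(0,1]$ and some $q\geq 1$. Define $$I_f(\lambda,\alpha,a,b)=\lambda\big(\alpha f(a)+(1-\alpha)f(b)\big)+(1-\lambda)f(\alpha a+(1-\alpha)b)-\frac{1}{b-a}\int_a^b f(x)\,dx,$$ $$\gamma_1(\alpha,\lambda)=(1-\alpha)\Big[\alpha\lambda-\frac{1-\alpha}{2}\Big],\qquad \gamma_2(\alpha,\lambda)=(\alpha\lambda)^2-\gamma_1(\alpha,\lambda),$$ $$c_1(\alpha,\lambda,s)=(\alpha\lambda)^{s+2}\frac{2}{(s+1)(s+2)}-\alpha\lambda\frac{(1-\alpha)^{s+1}}{s+1}+\frac{(1-\alpha)^{s+2}}{s+2},$$ $$c_2(\alpha,\lambda,s)=(1-\alpha\lambda)^{s+2}\frac{2}{(s+1)(s+2)}-\frac{(1-\alpha\lambda)(1+\alpha^{s+1})}{s+1}+\frac{1+\alpha^{s+2}}{s+2},$$ $$c_3(\alpha,\lambda,s)=\alpha\lambda\frac{(1-\alpha)^{s+1}}{s+1}-\frac{(1-\alpha)^{s+2}}{s+2},\qquad c_4(\alpha,\lambda,s)=\frac{(\alpha\lambda-1)(1-\alpha^{s+1})}{s+1}+\frac{1-\alpha^{s+2}}{s+2}.$$ Then: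 (i) if $\alpha\lambda\leq 1-\alpha\leq 1-\lambda(1-\alpha)$, $$|I_f(\lambda,\alpha,a,b)|\leq (b-a)\Big[\gamma_2^{1-\frac1q}(\alpha,\lambda)\big(c_1(\alpha,\lambda,s)|f'(b)|^q+c_2(\alpha,\lambda,s)|f'(a)|^q\big)^{\frac1q}+\gamma_2^{1-\frac1q}(1-\alpha,\lambda)\big(c_2(1-\alpha,\lambda,s)|f'(b)|^q+c_1(1-\alpha,\lambda,s)|f'(a)|^q\big)^{\frac1q}\Big];$$ (ii) if $\alpha\lambda\leq 1-\lambda(1-\alpha)\leq 1-\alpha$, $$|I_f(\lambda,\alpha,a,b)|\leq (b-a)\Big[\gamma_2^{1-\frac1q}(\alpha,\lambda)\big(c_1(\alpha,\lambda,s)|f'(b)|^q+c_2(\alpha,\lambda,s)|f'(a)|^q\big)^{\frac1q}+\gamma_1^{1-\frac1q}(1-\alpha,\lambda)\big(c_4(1-\alpha,\lambda,s)|f'(b)|^q+c_3(1-\alpha,\lambda,s)|f'(a)|^q\big)^{\frac1q}\Big];$$ (iii) if $1-\alpha\leq\alpha\lambda\leq 1-\lambda(1-\alpha)$, $$|I_f(\lambda,\alpha,a,b)|\leq (b-a)\Big[\gamma_1^{1-\frac1q}(\alpha,\lambda)\big(c_3(\alpha,\lambda,s)|f'(b)|^q+c_4(\alpha,\lambda,s)|f'(a)|^q\big)^{\frac1q}+\gamma_2^{1-\frac1q}(1-\alpha,\lambda)\big(c_2(1-\alpha,\lambda,s)|f'(b)|^q+c_1(1-\alpha,\lambda,s)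|f'(a)|^q\big)^{\frac1q}\Big].$$
   Context: For a fixed $s\in(0,1]$, a function $g:[a,b]\to[0,\infty)$ is called $s$-convex (in the second sense) on $[a,b]$ if $g(\theta x+(1-\theta)y)\leq \theta^{s}g(x)+(1-\theta)^{s}g(y)$ for all $x,y\in[a,b]$ and all $\theta\in[0,1]$. *)

(* Defs.v *)
From HB Require Import structures.
From mathcomp Require Import all_boot all_order all_algebra.
From mathcomp Require Import all_classical all_reals all_analysis.
Set Implicit Arguments. Unset Strict Implicit. Unset Printing Implicit Defensive.
Import Order.TTheory GRing.Theory Num.Theory.
Import numFieldNormedType.Exports.
Local Open Scope classical_set_scope.
Local Open Scope ring_scope.

(* s-convexity in the second sense of a nonnegative function g on [a,b]. *)
Definition s_convex_on {R : realType} (s a b : R) (g : R -> R) : Prop :=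
  (forall x, a <= x <= b -> 0 <= g x) /\
  (forall x y th, a <= x <= b -> a <= y <= b -> 0 <= th <= 1 ->
     g (th * x + (1 - th) * y) <= th `^ s * g x + (1 - th) `^ s * g y).

Definition I_f {R : realType} (f : R -> R) (lam al a b : R) : R :=
  lam * (al * f a + (1 - al) * f b) + (1 - lam) * f (al * a + (1 - al) * b)
  - (b - a)^-1 * Rintegral lebesgue_measure `[a, b] f.

Definition gamma1 {R : realType} (al lam : R) : R :=
  (1 - al) * (al * lam - (1 - al) / 2).
Definition gamma2 {R : realType} (al lam : R) : R :=
  (al * lam) ^+ 2 - gamma1 al lam.

Definition c1 {R : realType} (al lam s : R) : R :=
  (al * lam) `^ (s + 2) * (2 / ((s + 1) * (s + 2)))
  - al * lam * ((1 - al) `^ (s + 1) / (s + 1))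
  + (1 - al) `^ (s + 2) / (s + 2).
Definition c2 {R : realType} (al lam s : R) : R :=
  (1 - al * lam) `^ (s + 2) * (2 / ((s + 1) * (s + 2)))
  - (1 - al * lam) * (1 + al `^ (s + 1)) / (s + 1)
  + (1 + al `^ (s + 2)) / (s + 2).
Definition c3 {R : realType} (al lam s : R) : R :=
  al * lam * ((1 - al) `^ (s + 1) / (s + 1)) - (1 - al) `^ (s + 2) / (s + 2).
Definition c4 {R : realType} (al lam s : R) : R :=
  (al * lam - 1) * (1 - al `^ (s + 1)) / (s + 1) + (1 - al `^ (s + 2)) / (s + 2).

(* Main.v *)
Require Import Defs.
From HB Require Import structures.
From mathcomp Require Import all_boot all_order all_algebra.
From mathcomp Require Import all_classical all_reals all_analysis.
From mathcomp Require Import ring lra.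
Import Order.TTheory GRing.Theory Num.Theory.
Import numFieldNormedType.Exports.
Local Open Scope classical_set_scope.
Local Open Scope ring_scope.
Set Implicit Arguments. Unset Strict Implicit. Unset Printing Implicit Defensive.

Ltac nz := match goal with |- is_true (?x != 0) =>
  first [ rewrite gt_eqF //; lra | rewrite lt_eqF //; lra
        | rewrite gt_eqF //; nra | rewrite lt_eqF //; nra ] end.
Ltac fld := field; repeat (apply/andP; split); try nz; try done.

Section Aux1.
Context {R : realType}.

Lemma tangent_powR (q y M : R) : 1 <= q -> 0 <= y -> 0 < M ->
  y `^ q^-1 <= (1 - q^-1) * M `^ q^-1 + q^-1 * M `^ (q^-1 - 1) * y.
Proof.
move=> q1 y0 M0.
have q0 : 0 < q by lra.
have Mq0 : 0 < M `^ q^-1 by apply: powR_gt0.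
have E1 : M `^ (q^-1 - 1) = M `^ q^-1 / M.
  by rewrite powRB ?powRr1 ?(ltW M0)//; apply/implyP => _; rewrite gt_eqF.
rewrite E1.
have [->|q1'] := eqVneq q 1.
  by rewrite invr1 powRr1 ?(ltW M0)// subrr !mul0r add0r mul1r powRr1 ?(ltW M0)// divff ?gt_eqF// mul1r.
have q1s : 1 < q by rewrite lt_neqAle eq_sym q1' q1.
have Y := @conjugate_powR R ((y / M) `^ q^-1) 1 q (q / (q - 1)) (powR_ge0 _ _) ler01 q0.
have qq : 0 < q / (q - 1) by apply: divr_gt0 => //; lra.
have Hc : q^-1 + (q / (q - 1))^-1 = 1.
  by rewrite invf_div; fld.
have := Y qq Hc.
rewrite -powRrM mulVf ?gt_eqF// powRr1 ?divr_ge0 ?(ltW M0)// powR1 mulr1.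
move=> H.
have := ler_wpM2r (ltW Mq0) H.
rewrite -powRM ?divr_ge0 ?(ltW M0)// divfK ?gt_eqF// => H2.
apply: (le_trans H2); rewrite le_eqVlt; apply/orP; left; apply/eqP.
by rewrite invf_div; fld.
Qed.

Lemma le0_of_eps (X K : R) : 0 <= K -> (forall e, 0 < e -> X <= K * e) -> X <= 0.
Proof.
move=> K0 H; rewrite leNgt; apply/negP => X0.
have ee0 : 0 < X / (K + 1) by apply: divr_gt0 => //; lra.
have := H _ ee0.
have -> : K * (X / (K + 1)) = X - X / (K + 1) by fld.
lra.
Qed.

Lemma opt_powR (q X G C : R) : 1 <= q -> 0 <= X -> 0 <= G ->
  (forall M, 0 < M ->
     X <= (1 - q^-1) * M `^ q^-1 * G + q^-1 * M `^ (q^-1 - 1) * C) ->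
  X <= G `^ (1 - q^-1) * C `^ q^-1.
Proof.
move=> q1 X0 G0 H.
have q0 : 0 < q by lra.
have [q1e|q1'] := eqVneq q 1.
  have := H 1 ltr01; rewrite q1e invr1 subrr powRr0 !mul0r add0r !mul1r.
  by move=> XC; rewrite powRr0 mul1r powRr1 //; lra.
have q1s : 1 < q by rewrite lt_neqAle eq_sym q1' q1.
set r := q^-1 in H *.
have r0 : 0 < r by rewrite invr_gt0.
have r1 : r < 1 by rewrite invf_lt1.
have HM : forall M, 0 < M -> M `^ r = M `^ (r - 1) * M.
  move=> M M0; rewrite -[X in M `^ (r - 1) * X]powRr1 ?(ltW M0)// -powRD.
    by rewrite subrK.
  by apply/implyP => _; rewrite gt_eqF.
have [Cn|Cp|C0] := ltgtP C 0.
- pose M := - r * C / ((1 - r) * G + 1).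
  have den : 0 < (1 - r) * G + 1 by nra.
  have M0 : 0 < M by apply: divr_gt0 => //; nra.
  have := H M M0; rewrite HM //.
  have P0 : 0 < M `^ (r - 1) by apply: powR_gt0.
  have : (1 - r) * M * G + r * C < 0.
    rewrite /M; have -> : (1 - r) * (- r * C / ((1 - r) * G + 1)) * G + r * C
       = r * C / ((1 - r) * G + 1) by fld.
    have h1 : 0 < r / ((1 - r) * G + 1) by apply: divr_gt0.
    rewrite mulrAC; nra.
  nra.
- have [Gp|G0'|G00] := ltgtP G 0; first lra.
  + pose M := C / G.
    have M0 : 0 < M by apply: divr_gt0.
    have := H M M0.
    have E : M `^ (r - 1) = M `^ r / M.
      by rewrite powRB ?powRr1 ?(ltW M0)//; apply/implyP => _; rewrite gt_eqF.
    rewrite E.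
    have -> : (1 - r) * M `^ r * G + r * (M `^ r / M) * C = M `^ r * G.
      rewrite /M; fld.
    rewrite /M powRM ?(ltW Cp) ?invr_ge0 ?(ltW G0')//.
    have -> : G^-1 `^ r = (G `^ r)^-1.
      by rewrite -powR_inv1 ?(ltW G0')// -powRrM mulN1r powRN.
    have -> : G `^ (1 - r) = G * (G `^ r)^-1.
      rewrite powRD ?powRr1 ?powRN ?(ltW G0')//.
      by apply/implyP => _; rewrite gt_eqF.
    by move=> h; apply: (le_trans h); rewrite le_eqVlt; apply/orP; left; apply/eqP; ring.
  + rewrite G00 powR0 ?mul0r; last by rewrite subr_eq0 eq_sym lt_eqF.
    apply: (@le0_of_eps _ (r * C)); first nra.
    move=> e ee0.
    have M0 : 0 < e `^ (r - 1)^-1 by apply: powR_gt0.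
    have := H _ M0.
    rewrite G00 mulr0 add0r -powRrM mulVf ?powRr1 ?(ltW ee0)//; last by rewrite subr_eq0 lt_eqF.
    by move=> h; apply: (le_trans h); rewrite le_eqVlt; apply/orP; left; apply/eqP; ring.
- rewrite C0 powR0 ?gt_eqF// mulr0.
  apply: (@le0_of_eps _ ((1 - r) * G)); first nra.
  move=> e ee0.
  have := H (e `^ q) (powR_gt0 _ ee0).
  rewrite C0 mulr0 addr0 -powRrM mulfV ?gt_eqF// powRr1 ?(ltW ee0)//.
  by move=> h; apply: (le_trans h); rewrite le_eqVlt; apply/orP; left; apply/eqP; ring.
Qed.

End Aux1.

Section Aux2.
Context {R : realType}.

Definition pwr (t v : R) : R := (Num.max v 0) `^ t.

Lemma pwE (t v : R) : 0 <= v -> pwr t v = v `^ t.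
Proof. by move=> v0; rewrite /pwr max_l. Qed.

Lemma pw_derive_pos (t x : R) : 0 < x -> is_derive x 1 (pwr t) (t * x `^ (t - 1)).
Proof.
move=> x0; have := is_derive1_powR t x0; apply: near_eq_is_derive.
near=> y; rewrite pwE //; apply: ltW; near: y; exact: lt_nbhsr.
Unshelve. all: by end_near. Qed.

Lemma pw_derive_neg (t x : R) : 0 < t -> x < 0 -> is_derive x 1 (pwr t) 0.
Proof.
move=> t0 x0; have := @is_derive_cst _ R^o R^o (0:R) x 1; apply: near_eq_is_derive.
near=> y; rewrite /pwr max_r ?powR0 ?gt_eqF//; apply: ltW; near: y; exact: lt_nbhsl.
Unshelve. all: by end_near. Qed.

Lemma pw_cont (t : R) : 0 < t -> continuous (pwr t).
Proof.
move=> t0 x; have [xn|xp|->] := ltgtP x 0.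
- apply/differentiable_continuous; rewrite -derivable1_diffP.
  by have [] := @pw_derive_neg t x t0 xn.
- apply/differentiable_continuous; rewrite -derivable1_diffP.
  by have [] := @pw_derive_pos t x xp.
- have E : pwr t 0 = 0 by rewrite /pwr maxxx powR0 ?gt_eqF.
  rewrite /continuous_at E.
  apply/cvgrPdist_le => e ee0.
  have d0 : 0 < e `^ t^-1 by apply: powR_gt0.
  near=> y.
  have hy : `|y| < e `^ t^-1.
    near: y. exists (e `^ t^-1) => //= z; rewrite /ball_/= sub0r normrN. by [].
  rewrite sub0r normrN ger0_norm ?powR_ge0//.
  have -> : e = (e `^ t^-1) `^ t by rewrite -powRrM mulVf ?gt_eqF// powRr1 ?ltW.
  apply: ge0_ler_powR; rewrite ?nnegrE ?le_max ?lexx ?orbT ?powR_ge0 ?ltW//.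
  rewrite gt_max d0 andbT; apply: le_lt_trans hy; exact: ler_norm.
Unshelve. all: by end_near. Qed.

End Aux2.

Section Aux3.
Context {R : realType}.
Notation mu := (@lebesgue_measure R).

Definition ctsOn (psi : R -> R) (c d : R) :=
  forall x, c <= x <= d -> {for x, continuous psi}.

Lemma ctsOn_within psi c d : ctsOn psi c d -> {within `[c, d], continuous psi}.
Proof.
move=> h; apply: continuous_in_subspaceT => x; rewrite inE /= in_itv /=.
exact: h.
Qed.

Lemma ctsOn_int psi c d : ctsOn psi c d -> mu.-integrable `[c, d] (EFin \o psi).
Proof.
move=> h; apply: continuous_compact_integrable; first exact: segment_compact.
exact: ctsOn_within.
Qed.

Lemma ctsOnS psi c d c' d' : c <= c' -> d' <= d -> ctsOn psi c d -> ctsOn psi c' d'.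
Proof. move=> h1 h2 h x /andP[x1 x2]; apply: h; apply/andP; split; lra. Qed.

Lemma int_split psi c k d : c <= k <= d -> ctsOn psi c d ->
  \int[mu]_(x in `[c, d]) psi x =
  \int[mu]_(x in `[c, k]) psi x + \int[mu]_(x in `[k, d]) psi x.
Proof.
move=> /andP[ck kd] h.
have hi := ctsOn_int h.
have := @Rintegral_itvB R psi (BLeft c) (BRight d) k hi.
rewrite !bnd_simp => /(_ ck kd) E.
have E2 : \int[mu]_(x in `]k, d]) psi x = \int[mu]_(x in `[k, d]) psi x.
  apply: Rintegral_itv_obnd_cbnd.
  apply: integrableS hi => //; apply: subset_itvr; rewrite bnd_simp //.
rewrite -E2 -E; ring.
Qed.

Lemma mu_cc c d : c <= d -> fine (mu `[c, d]) = d - c.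
Proof.
move=> cd; rewrite lebesgue_measure_itv /= lte_fin.
case: ltP => [_ //|dc]; have -> : d = c by apply/eqP; rewrite eq_le cd dc.
by rewrite subrr.
Qed.

Definition Ef (psi : R -> R) (c d k : R) :=
  (d - k) * psi d - (c - k) * psi c - \int[mu]_(x in `[c, d]) psi x.

Definition ndec (psi : R -> R) (c d : R) :=
  forall x y, c <= x -> x <= y -> y <= d -> psi x <= psi y.

Lemma Emono psi c d k : c <= d -> ctsOn psi c d -> ndec psi c d ->
  (k <= c -> 0 <= Ef psi c d k) /\ (d <= k -> Ef psi c d k <= 0).
Proof.
move=> cd hc hn.
have hi := ctsOn_int hc.
have I1 : \int[mu]_(x in `[c, d]) psi x <= psi d * (d - c).
  rewrite -mu_cc // -Rintegral_cst //.
  apply: le_Rintegral => //; first by apply: ctsOn_int => y _; exact: cst_continuous.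
  - move=> x; rewrite /= in_itv /= => /andP[x1 x2]; exact: hn.
have I2 : psi c * (d - c) <= \int[mu]_(x in `[c, d]) psi x.
  rewrite -mu_cc // -Rintegral_cst //.
  apply: le_Rintegral => //; first by apply: ctsOn_int => y _; exact: cst_continuous.
  - move=> x; rewrite /= in_itv /= => /andP[x1 x2]; exact: hn.
have hcd : psi c <= psi d by apply: hn.
rewrite /Ef; move: I1 I2 hcd; set J := \int[mu]_(x in _) _; clear hc hn hi; move=> I1 I2 hcd; split => hk; nra.
Qed.

Lemma Esplit psi c k d : c <= k <= d -> ctsOn psi c d ->
  Ef psi c d k = Ef psi c k k + Ef psi k d k.
Proof. by move=> ckd h; rewrite /Ef (int_split ckd h); ring. Qed.

Lemma EfD phi G c d k : ctsOn phi c d -> ctsOn G c d ->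
  Ef (fun x => G x + phi x) c d k = Ef G c d k + Ef phi c d k.
Proof.
move=> h1 h2; rewrite /Ef RintegralD //; try exact: ctsOn_int.
ring.
Qed.

Lemma EfB phi G c d k : ctsOn phi c d -> ctsOn G c d ->
  Ef (fun x => G x - phi x) c d k = Ef G c d k - Ef phi c d k.
Proof.
move=> h1 h2; rewrite /Ef RintegralB //; try exact: ctsOn_int.
ring.
Qed.

Lemma Eabs phi G c d k : c <= d -> ctsOn phi c d -> ctsOn G c d ->
  ndec (fun x => G x + phi x) c d -> ndec (fun x => G x - phi x) c d ->
  (k <= c -> `|Ef phi c d k| <= Ef G c d k) /\
  (d <= k -> `|Ef phi c d k| <= - Ef G c d k).
Proof.
move=> cd h1 h2 n1 n2.
have cD : ctsOn (fun x => G x + phi x) c d.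
  by move=> x hx; apply: continuousD; [exact: h2|exact: h1].
have cB : ctsOn (fun x => G x - phi x) c d.
  by move=> x hx; apply: continuousB; [exact: h2|exact: h1].
have [A1 A2] := Emono k cd cD n1.
have [B1 B2] := Emono k cd cB n2.
rewrite EfD // in A1 A2; rewrite EfB // in B1 B2.
split => hk.
- have := A1 hk; have := B1 hk; move: (Ef phi c d k) (Ef G c d k) => u v.
  move=> h3 h4; rewrite ler_norml; apply/andP; split; lra.
- have := A2 hk; have := B2 hk; move: (Ef phi c d k) (Ef G c d k) => u v.
  move=> h3 h4; rewrite ler_norml; apply/andP; split; lra.
Qed.

End Aux3.

Section Aux4.
Context {R : realType}.
Lemma pw0 (t : R) : 0 < t -> pwr t 0 = 0.
Proof. by move=> t0; rewrite /pwr maxxx powR0 ?gt_eqF. Qed.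
Lemma pw1 (t : R) : pwr t 1 = 1.
Proof. by rewrite pwE ?ler01 // powR1. Qed.

Definition Qf (s A B v : R) := (pwr (s+1) v * B - pwr (s+1) (1 - v) * A) / (s + 1).
Definition Rf (s A B v : R) := (pwr (s+2) v * B + pwr (s+2) (1 - v) * A) / ((s + 1) * (s + 2)).
Definition ee1 (s A B vc vd vk : R) :=
  (vd - vk) * Qf s A B vd - (vc - vk) * Qf s A B vc - Rf s A B vd + Rf s A B vc.
Definition ee0 (vc vd vk : R) :=
  (vd - vk) * vd - (vc - vk) * vc - (vd ^+ 2 - vc ^+ 2) / 2.

Lemma powS (s v : R) : 0 <= v -> 0 < s -> v `^ (s + 2) = v * v `^ (s + 1).
Proof.
move=> v0 s0; have h : 0 < s + 2 by lra.
rewrite -(mulr_powRB1 v0 h); congr (_ * _ `^ _); ring.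
Qed.

Lemma alg1 (s A B al lam : R) : 0 < s -> 0 <= al <= 1 -> 0 <= lam <= 1 ->
  - ee1 s A B 0 (al * lam) (al * lam) + ee1 s A B (al * lam) (1 - al) (al * lam)
  = c1 al lam s * B + c2 al lam s * A.
Proof.
move=> s0 /andP[a0 a1] /andP[l0 l1].
have s1 : 0 < s + 1 by lra.
have s2 : 0 < s + 2 by lra.
have P0 : 0 <= al * lam by nra.
have P1 : 0 <= 1 - al * lam by nra.
rewrite /ee1 /Qf /Rf /c1 /c2 !subr0 !pw0 // !pw1 !pwE ?subKr //; try lra.
rewrite (powS (v := 1 - al)) ?(powS (v := al)) //; try lra.
fld.
Qed.

Lemma alg1' (al lam : R) :
  - ee0 0 (al * lam) (al * lam) + ee0 (al * lam) (1 - al) (al * lam) = gamma2 al lam.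
Proof. rewrite /ee0 /gamma2 /gamma1; fld. Qed.

Lemma alg2 (s A B al lam : R) : 0 < s -> 0 <= al <= 1 -> 0 <= lam <= 1 ->
  - ee1 s A B 0 (1 - al) (al * lam) = c3 al lam s * B + c4 al lam s * A.
Proof.
move=> s0 /andP[a0 a1] /andP[l0 l1].
have s1 : 0 < s + 1 by lra.
have s2 : 0 < s + 2 by lra.
have E : 1 - (1 - al) = al by ring.
rewrite /ee1 /Qf /Rf /c3 /c4 !subr0 !pw0 // !pw1 !E !pwE //; try lra.
rewrite (powS (v := 1 - al)) ?(powS (v := al)) //; try lra.
fld.
Qed.

Lemma alg2' (al lam : R) : - ee0 0 (1 - al) (al * lam) = gamma1 al lam.
Proof. rewrite /ee0 /gamma1; fld. Qed.

Lemma alg3 (s A B al lam : R) : 0 < s -> 0 <= al <= 1 -> 0 <= lam <= 1 ->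
  - ee1 s A B (1 - al) (1 - (1 - al) * lam) (1 - (1 - al) * lam)
  + ee1 s A B (1 - (1 - al) * lam) 1 (1 - (1 - al) * lam)
  = c2 (1 - al) lam s * B + c1 (1 - al) lam s * A.
Proof.
move=> s0 /andP[a0 a1] /andP[l0 l1].
have s1 : 0 < s + 1 by lra.
have s2 : 0 < s + 2 by lra.
have E : 1 - (1 - al) = al by ring.
have E2 : 1 - (1 - (1 - al) * lam) = (1 - al) * lam by ring.
rewrite /ee1 /Qf /Rf /c1 /c2 !subrr !pw0 // !pw1 !E !E2 !pwE //; try nra.
rewrite (powS (v := 1 - al)) ?(powS (v := al)) //; try lra.
fld.
Qed.

Lemma alg3' (al lam : R) :
  - ee0 (1 - al) (1 - (1 - al) * lam) (1 - (1 - al) * lam)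
  + ee0 (1 - (1 - al) * lam) 1 (1 - (1 - al) * lam) = gamma2 (1 - al) lam.
Proof. rewrite /ee0 /gamma2 /gamma1; fld. Qed.

Lemma alg4 (s A B al lam : R) : 0 < s -> 0 <= al <= 1 -> 0 <= lam <= 1 ->
  ee1 s A B (1 - al) 1 (1 - (1 - al) * lam)
  = c4 (1 - al) lam s * B + c3 (1 - al) lam s * A.
Proof.
move=> s0 /andP[a0 a1] /andP[l0 l1].
have s1 : 0 < s + 1 by lra.
have s2 : 0 < s + 2 by lra.
have E : 1 - (1 - al) = al by ring.
rewrite /ee1 /Qf /Rf /c3 /c4 !subrr !pw0 // !pw1 !E !pwE //; try nra.
rewrite (powS (v := 1 - al)) ?(powS (v := al)) //; try lra.
fld.
Qed.

Lemma alg4' (al lam : R) :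
  ee0 (1 - al) 1 (1 - (1 - al) * lam) = gamma1 (1 - al) lam.
Proof. rewrite /ee0 /gamma1; fld. Qed.

End Aux4.

Section Aux5.
Context {R : realType}.
Section GT.
Variables (a b A B s K0 K1 : R).
Hypothesis ab : a < b.
Hypothesis s0 : 0 < s.
Let ba : 0 < b - a. Proof. by rewrite subr_gt0. Qed.
Let s1 : 0 < s + 1. Proof. have := s0; lra. Qed.
Let s2 : 0 < s + 2. Proof. have := s0; lra. Qed.
Definition uu (x : R) := (x - a) / (b - a).
Lemma der_u (x : R) : is_derive x 1 uu (b - a)^-1.
Proof.
rewrite /uu; apply: is_derive_eq.
by rewrite scaler0 add0r subr0; exact: mulr1.
Qed.
Lemma der_1u (x : R) : is_derive x 1 (fun y => 1 - uu y) (- (b - a)^-1).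
Proof.
rewrite /uu; apply: is_derive_eq.
by rewrite scaler0 !add0r subr0 mul1r; congr (- _); exact: mulr1.
Qed.
Lemma der_pw_u (t x : R) : 0 < uu x ->
  is_derive x 1 (fun y => pwr t (uu y)) (t * (uu x)`^(t-1) * (b-a)^-1).
Proof.
move=> h; have := is_derive1_comp (pw_derive_pos t h) (der_u x).
move=> h3; exact: h3.
Qed.
Lemma der_pw_1u (t x : R) : 0 < 1 - uu x ->
  is_derive x 1 (fun y => pwr t (1 - uu y)) (t * (1 - uu x)`^(t-1) * - (b-a)^-1).
Proof.
move=> h; have := @is_derive1_comp _ (pwr t) (fun y => 1 - uu y) x _ _ (pw_derive_pos t h) (der_1u x).
move=> h3; exact: h3.
Qed.

Definition Gtl (x : R) := K0 * x + K1 * (b - a) * Qf s A B (uu x).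
Definition Prm (x : R) := K0 * (x ^+ 2 / 2) + K1 * (b - a) ^+ 2 * Rf s A B (uu x).
Definition gg (x : R) := (1 - uu x) `^ s * A + (uu x) `^ s * B.

Lemma Gtl_der x : a < x < b -> is_derive x 1 Gtl (K0 + K1 * gg x).
Proof.
move=> /andP[ax xb].
have u0 : 0 < uu x by rewrite /uu; apply: divr_gt0; lra.
have u1 : 0 < 1 - uu x.
  rewrite /uu subr_gt0 ltr_pdivrMr; lra.
have d1 := der_pw_u (s+1) u0.
have d2 := der_pw_1u (s+1) u1.
rewrite /Gtl /Qf; apply: is_derive_eq.
have sc : forall u v : R, u *: v = u * v by [].
rewrite !sc !addrK /gg; fld.
Qed.

Lemma Prm_der x : a < x < b -> is_derive x 1 Prm (Gtl x).
Proof.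
move=> /andP[ax xb].
have u0 : 0 < uu x by rewrite /uu; apply: divr_gt0; lra.
have u1 : 0 < 1 - uu x.
  rewrite /uu subr_gt0 ltr_pdivrMr; lra.
have d1 := der_pw_u (s+2) u0.
have d2 := der_pw_1u (s+2) u1.
rewrite /Prm /Rf; apply: is_derive_eq.
have sc : forall u v : R, u *: v = u * v by [].
have e2 : s + 2 - 1 = s + 1 by ring.
rewrite !sc e2 /Gtl /Qf !pwE ?(ltW u0) ?(ltW u1) //. 
rewrite expr2 ?mulr1n; fld.
Qed.

Lemma uu_cont : continuous uu.
Proof.
move=> x; rewrite /uu.
apply: (@continuousM _ _ (fun x => x - a) (fun _ => (b - a)^-1) x); last exact: cst_continuous.
by apply: (@continuousB _ _ _ id (fun _ => a)); [exact: id|exact: cst_continuous].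
Qed.

Lemma pwu_cont t : 0 < t -> continuous (fun x => pwr t (uu x)).
Proof. move=> t0 x; apply: (@continuous_comp _ _ _ uu (pwr t)); [exact: uu_cont|exact: pw_cont]. Qed.

Lemma pw1u_cont t : 0 < t -> continuous (fun x => pwr t (1 - uu x)).
Proof.
move=> t0 x; apply: (@continuous_comp _ _ _ (fun x => 1 - uu x) (pwr t)); last exact: pw_cont.
have h : {for x, continuous ((fun _ => (1:R)) - uu)}.
  by apply: continuousB; [exact: cst_continuous|exact: uu_cont].
exact: h.
Qed.

Lemma lin_cont (F G : R -> R) (k1 k2 : R) : continuous F -> continuous G ->
  continuous (fun x => k1 * F x + k2 * G x).
Proof.
move=> hF hG x.
apply: (@continuousD _ _ _ (fun x => k1 * F x) (fun x => k2 * G x)).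
- by apply: (@continuousM _ _ (fun _ => k1) F); [exact: cst_continuous|exact: hF].
- by apply: (@continuousM _ _ (fun _ => k2) G); [exact: cst_continuous|exact: hG].
Qed.

Lemma Gtl_cont : continuous Gtl.
Proof.
have -> : Gtl = fun x => K0 * x + (K1 * (b - a) / (s + 1)) *
   (B * pwr (s+1) (uu x) + (- A) * pwr (s+1) (1 - uu x)).
  by apply/funext => x; rewrite /Gtl /Qf; fld.
apply: (@lin_cont id (fun x => B * pwr (s+1) (uu x) + (- A) * pwr (s+1) (1 - uu x))). 
  by move=> ?; exact: cvg_id.
by apply: (@lin_cont (fun x => pwr (s+1) (uu x)) (fun x => pwr (s+1) (1 - uu x)) B (- A));
  [exact: pwu_cont | exact: pw1u_cont].
Qed.

Lemma Prm_cont : continuous Prm.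
Proof.
have -> : Prm = fun x => (K0 / 2) * (x * x) + (K1 * (b - a) ^+ 2 / ((s + 1) * (s + 2))) *
   (B * pwr (s+2) (uu x) + A * pwr (s+2) (1 - uu x)).
  by apply/funext => x; rewrite /Prm /Rf expr2; fld.
apply: (@lin_cont (fun x => x * x) (fun x => B * pwr (s+2) (uu x) + A * pwr (s+2) (1 - uu x))).
  by move=> x; apply: (@continuousM _ _ id id).
by apply: (@lin_cont (fun x => pwr (s+2) (uu x)) (fun x => pwr (s+2) (1 - uu x)) B A);
  [exact: pwu_cont | exact: pw1u_cont].
Qed.

Lemma int_Gt c d : a <= c -> c <= d -> d <= b ->
  \int[lebesgue_measure]_(x in `[c, d]) Gtl x = Prm d - Prm c.
Proof.
move=> ac cd db.
have [ce|cd'] := eqVneq c d.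
  by rewrite ce set_itv1 Rintegral_set1 subrr.
have cd2 : c < d by rewrite lt_neqAle cd' cd.
rewrite /Rintegral (@continuous_FTC2 _ Gtl Prm c d cd2) ?fineB //=.
- apply: continuous_subspaceT; exact: Gtl_cont.
- split.
  + move=> x; rewrite in_itv /= => /andP[cx xd].
    have [] := @Prm_der x; first by apply/andP; split; lra.
    by [].
  + by apply: cvg_at_right_filter; exact: Prm_cont.
  + by apply: cvg_at_left_filter; exact: Prm_cont.
- move=> x; rewrite in_itv /= => /andP[cx xd].
  have h := @Prm_der x; rewrite derive1E; apply: derive_val.
  by apply: h; apply/andP; split; lra.
Qed.

End GT.
End Aux5.

Section Aux6.
Context {R : realType}.

Lemma ndecS (psi : R -> R) a b c d : a <= c -> d <= b -> ndec psi a b -> ndec psi c d.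
Proof. move=> h1 h2 h x y h3 h4 h5; apply: h; lra. Qed.

Lemma part_bound (phi G : R -> R) (a b c d k : R) : a <= c -> c <= d -> d <= b ->
  ctsOn phi a b -> ctsOn G a b ->
  ndec (fun x => G x + phi x) a b -> ndec (fun x => G x - phi x) a b ->
  [/\ (k <= c -> `|Ef phi c d k| <= Ef G c d k),
      (d <= k -> `|Ef phi c d k| <= - Ef G c d k) &
      (c <= k <= d -> `|Ef phi c d k| <= - Ef G c k k + Ef G k d k)].
Proof.
move=> ac cd db hp hG n1 n2.
have H := fun c' d' (h1 : a <= c') (h2 : c' <= d') (h3 : d' <= b) =>
  @Eabs R phi G c' d' k h2 (ctsOnS h1 h3 hp) (ctsOnS h1 h3 hG)
     (ndecS h1 h3 n1) (ndecS h1 h3 n2).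
have [H1 H2] := H c d ac cd db.
split => // /andP[ck kd].
rewrite (@Esplit R phi c k d); last exact: (ctsOnS ac db hp); last by rewrite ck kd.
have [_ H3] := H c k ac ck (le_trans kd db).
have [H4 _] := H k d (le_trans ac ck) kd db.
apply: (le_trans (ler_normD _ _)).
apply: lerD; [exact: H3|exact: H4].
Qed.

Lemma Ef_Gtl (a b A B s K0 K1 c d k : R) : a < b -> 0 < s ->
  a <= c -> c <= d -> d <= b ->
  Ef (Gtl a b A B s K0 K1) c d k =
  (b - a) ^+ 2 * (K0 * ee0 (uu a b c) (uu a b d) (uu a b k)
                 + K1 * ee1 s A B (uu a b c) (uu a b d) (uu a b k)).
Proof.
move=> ab s0 ac cd db.
rewrite /Ef (@int_Gt R a b A B s K0 K1 ab s0 c d ac cd db) /Gtl /Prm /ee0 /ee1 /uu.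
fld.
Qed.

End Aux6.

Section Aux7.
Context {R : realType}.

Lemma interior_ab (I : set R) (a b : R) : is_interval I ->
  interior I a -> interior I b -> forall x, a <= x <= b -> interior I x.
Proof.
move=> hI ha hb x /andP[ax xb].
have [<-//|ax'] := eqVneq a x.
have [->//|xb'] := eqVneq x b.
have ax2 : a < x by rewrite lt_neqAle ax' ax.
have xb2 : x < b by rewrite lt_neqAle xb' xb.
have sub : `]a, b[ `<=` I.
  move=> z; rewrite /= in_itv /= => /andP[az zb].
  apply: (hI a b (interior_subset ha) (interior_subset hb)).
  by rewrite !ltW.
rewrite /interior /=.
apply: (@filterS _ _ _ `]a, b[) => //.
apply: open_nbhs_nbhs; split; first exact: interval_open.
by rewrite /= in_itv /= ax2 xb2.
Qed.

Lemma fin_comb (D I E1 E2 U1 U2 : R) : 0 < D -> D * I = E1 + E2 ->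
  `|E1| / D ^+ 2 <= U1 -> `|E2| / D ^+ 2 <= U2 -> `|I| <= D * (U1 + U2).
Proof.
move=> D0 hI h1 h2.
have D2 : 0 < D ^+ 2 by rewrite exprn_gt0.
rewrite ler_pdivrMr // in h1; rewrite ler_pdivrMr // in h2.
have h3 : `|D * I| <= (U1 + U2) * D ^+ 2.
  rewrite hI; apply: le_trans (ler_normD _ _) _; rewrite mulrDl; exact: lerD.
rewrite normrM (ger0_norm (ltW D0)) in h3.
have : D * `|I| <= D * (D * (U1 + U2)).
  by apply: le_trans h3 _; rewrite le_eqVlt; apply/orP; left; apply/eqP; rewrite expr2; ring.
by rewrite ler_pM2l.
Qed.

End Aux7.

Theorem theorem2p2 (R : realType) (I : set R) (f : R -> R) (a b al lam s q : R) :
  is_interval I ->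
  (forall x, interior I x -> derivable f x 1) ->
  interior I a -> interior I b -> a < b ->
  lebesgue_measure.-integrable `[a, b] (EFin \o (derive1 f)) ->
  0 <= al <= 1 -> 0 <= lam <= 1 ->
  0 < s <= 1 -> 1 <= q ->
  s_convex_on s a b (fun x => `|(derive1 f) x| `^ q) ->
  let A := `|(derive1 f) a| `^ q in
  let B := `|(derive1 f) b| `^ q in
  let e := 1 - q^-1 in
  (al * lam <= 1 - al <= 1 - lam * (1 - al) ->
     `|I_f f lam al a b| <= (b - a) *
       (gamma2 al lam `^ e * (c1 al lam s * B + c2 al lam s * A) `^ q^-1
        + gamma2 (1 - al) lam `^ e
          * (c2 (1 - al) lam s * B + c1 (1 - al) lam s * A) `^ q^-1)) /\
  (al * lam <= 1 - lam * (1 - al) <= 1 - al ->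
     `|I_f f lam al a b| <= (b - a) *
       (gamma2 al lam `^ e * (c1 al lam s * B + c2 al lam s * A) `^ q^-1
        + gamma1 (1 - al) lam `^ e
          * (c4 (1 - al) lam s * B + c3 (1 - al) lam s * A) `^ q^-1)) /\
  (1 - al <= al * lam <= 1 - lam * (1 - al) ->
     `|I_f f lam al a b| <= (b - a) *
       (gamma1 al lam `^ e * (c3 al lam s * B + c4 al lam s * A) `^ q^-1
        + gamma2 (1 - al) lam `^ e
          * (c2 (1 - al) lam s * B + c1 (1 - al) lam s * A) `^ q^-1)).
Proof.
move=> hI hder ha hb ab _ /andP[al0 al1] /andP[l0 l1] /andP[s0 s1] q1 [gnn gcv] A B e.
have ba : 0 < b - a by rewrite subr_gt0.
have ba2 : 0 < (b - a) ^+ 2 by rewrite exprn_gt0.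
have q0 : 0 < q by lra.
have A0 : 0 <= A by apply: powR_ge0.
have B0 : 0 <= B by apply: powR_ge0.
have intx := interior_ab hI ha hb.
have fd : forall x, a <= x <= b -> derivable f x 1.
  by move=> x h; apply: hder; exact: intx.
have fc : ctsOn f a b.
  by move=> x hx; apply/differentiable_continuous; rewrite -derivable1_diffP; exact: fd.
have ggnn : forall x, 0 <= gg a b A B s x.
  move=> x; rewrite /gg; apply: addr_ge0; apply: mulr_ge0; [exact: powR_ge0|exact: A0|exact: powR_ge0|exact: B0].
have fb : forall x, a <= x <= b -> `|derive1 f x| <= (gg a b A B s x) `^ q^-1.
  move=> x /andP[ax xb].
  have u0 : 0 <= uu a b x by rewrite /uu; apply: divr_ge0; lra.
  have u1 : uu a b x <= 1 by rewrite /uu ler_pdivrMr //; lra.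
  have := gcv a b (1 - uu a b x).
  have Ex : (1 - uu a b x) * a + (1 - (1 - uu a b x)) * b = x by rewrite /uu; fld.
  rewrite Ex (_ : 1 - (1 - uu a b x) = uu a b x); last ring.
  move=> H.
  have {}H : `|derive1 f x| `^ q <= gg a b A B s x.
    rewrite /gg /A /B; apply: H; apply/andP; split; lra.
  have -> : `|derive1 f x| = (`|derive1 f x| `^ q) `^ q^-1.
    by rewrite -powRrM mulfV ?gt_eqF // powRr1.
  by apply: ge0_ler_powR; rewrite ?nnegrE ?powR_ge0 ?invr_ge0 ?(ltW q0).
have dv : forall (F : R -> R) (x df : R), is_derive x 1 F df -> derive1 F x = df.
  by move=> F x df h; rewrite derive1E; exact: derive_val.
have key : forall M, 0 < M ->
  let G := Gtl a b A B s ((1 - q^-1) * M `^ q^-1) (q^-1 * M `^ (q^-1 - 1)) in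
  [/\ ctsOn G a b, ndec (fun x => G x + f x) a b & ndec (fun x => G x - f x) a b].
  move=> M M0 G.
  set K0 := (1 - q^-1) * M `^ q^-1.
  set K1 := q^-1 * M `^ (q^-1 - 1).
  have hG : ctsOn G a b by move=> x _; exact: Gtl_cont.
  have tb : forall x, a <= x <= b -> `|derive1 f x| <= K0 + K1 * gg a b A B s x.
    move=> x hx; apply: le_trans (fb x hx) _.
    by rewrite /K0 /K1; apply: tangent_powR.
  have df : forall x, a < x < b -> is_derive x 1 f (derive1 f x).
    move=> x /andP[ax bx]; rewrite derive1E; apply: derivableP; apply: fd.
    by rewrite !ltW.
  have dG : forall x, a < x < b -> is_derive x 1 G (K0 + K1 * gg a b A B s x).
    by move=> x hx; exact: (Gtl_der A B K0 K1 ab s0 hx).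
  split => //.
  - apply: ger0_derive1_ndecr.
    + move=> z; rewrite in_itv /= => hz.
      by have [] := is_deriveD (dG z hz) (df z hz).
    + move=> z; rewrite in_itv /= => hz.
      rewrite (dv _ _ _ (is_deriveD (dG z hz) (df z hz))).
      have := tb z; rewrite ler_norml => /(_ _)/andP[]; first by case/andP: hz => *; rewrite !ltW.
      move=> h1 h2; lra.
    + apply: ctsOn_within => z hz.
      by apply: continuousD; [exact: hG|exact: fc].
  - apply: ger0_derive1_ndecr.
    + move=> z; rewrite in_itv /= => hz.
      by have [] := is_deriveB (dG z hz) (df z hz).
    + move=> z; rewrite in_itv /= => hz.
      rewrite (dv _ _ _ (is_deriveB (dG z hz) (df z hz))).
      have := tb z; rewrite ler_norml => /(_ _)/andP[]; first by case/andP: hz => *; rewrite !ltW.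
      move=> h1 h2; lra.
    + apply: ctsOn_within => z hz.
      by apply: continuousB; [exact: hG|exact: fc].
set m := al * a + (1 - al) * b.
pose p := a + al * lam * (b - a).
pose r := a + (1 - (1 - al) * lam) * (b - a).
have ua : uu a b a = 0 by rewrite /uu subrr mul0r.
have ub : uu a b b = 1 by rewrite /uu divff ?gt_eqF.
have um : uu a b m = 1 - al by rewrite /uu /m; fld.
have up : uu a b p = al * lam by rewrite /uu /p; fld.
have ur : uu a b r = 1 - (1 - al) * lam by rewrite /uu /r; fld.
have am : a <= m by rewrite /m; nra.
have mb : m <= b by rewrite /m; nra.
have P0 : 0 <= al * lam by nra.
have Q0 : 0 <= (1 - al) * lam by nra.
have ap : a <= p by rewrite /p; nra.
have rb : r <= b by rewrite /r; nra.
have lA : forall x : R, x <= x := fun x => lexx x.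
pose X1 : R := (`|Ef f a m p| / (b - a) ^+ 2).
pose X2 : R := (`|Ef f m b r| / (b - a) ^+ 2).
have X10 : 0 <= X1 by rewrite /X1; apply: divr_ge0 => //; exact: ltW.
have X20 : 0 <= X2 by rewrite /X2; apply: divr_ge0 => //; exact: ltW.
have P1s : al * lam <= 1 - al ->
    X1 <= gamma2 al lam `^ (1 - q^-1) * (c1 al lam s * B + c2 al lam s * A) `^ q^-1.
  move=> h.
  have pm : p <= m by rewrite /p /m; nra.
  apply: opt_powR => //; first by rewrite /gamma2 /gamma1; nra.
  move=> M M0.
  have [hG n1 n2] := key M M0.
  have [_ _ H] := part_bound p (lA a) am mb fc hG n1 n2.
  have := H (introT andP (conj ap pm)).
  rewrite (Ef_Gtl _ _ _ _ p ab s0 (lA a) ap (le_trans pm mb)).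
  rewrite (Ef_Gtl _ _ _ _ p ab s0 ap pm mb).
  rewrite ua up um.
  move=> h'; rewrite /X1 ler_pdivrMr //; apply: le_trans h' _.
  rewrite -(alg1 A B s0 (introT andP (conj al0 al1)) (introT andP (conj l0 l1))).
  rewrite -(alg1' al lam).
  by rewrite le_eqVlt; apply/orP; left; apply/eqP; ring.
have al01 : 0 <= al <= 1 by rewrite al0 al1.
have l01 : 0 <= lam <= 1 by rewrite l0 l1.
have P1n : 1 - al <= al * lam ->
    X1 <= gamma1 al lam `^ (1 - q^-1) * (c3 al lam s * B + c4 al lam s * A) `^ q^-1.
  move=> h.
  have mp : m <= p by rewrite /p /m; nra.
  apply: opt_powR => //; first by rewrite /gamma1; nra.
  move=> M M0.
  have [hG n1 n2] := key M M0.
  have [_ H _] := part_bound p (lA a) am mb fc hG n1 n2.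
  have := H mp.
  rewrite (Ef_Gtl _ _ _ _ p ab s0 (lA a) am mb).
  rewrite ua up um.
  move=> h'; rewrite /X1 ler_pdivrMr //; apply: le_trans h' _.
  rewrite -(alg2 A B s0 al01 l01) -(alg2' al lam).
  by rewrite le_eqVlt; apply/orP; left; apply/eqP; ring.
have P2s : 1 - al <= 1 - lam * (1 - al) ->
    X2 <= gamma2 (1 - al) lam `^ (1 - q^-1)
          * (c2 (1 - al) lam s * B + c1 (1 - al) lam s * A) `^ q^-1.
  move=> h.
  have mr : m <= r.
    have h2 : 0 <= (b - a) * (al - (1 - al) * lam) by apply: mulr_ge0; nra.
    by rewrite /r /m; nra.
  apply: opt_powR => //; first by rewrite /gamma2 /gamma1; nra.
  move=> M M0.
  have [hG n1 n2] := key M M0.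
  have [_ _ H] := part_bound r am mb (lA b) fc hG n1 n2.
  have := H (introT andP (conj mr rb)).
  rewrite (Ef_Gtl _ _ _ _ r ab s0 am mr (le_trans rb (lA b))).
  rewrite (Ef_Gtl _ _ _ _ r ab s0 (le_trans am mr) rb (lA b)).
  rewrite um ur ub.
  move=> h'; rewrite /X2 ler_pdivrMr //; apply: le_trans h' _.
  rewrite -(alg3 A B s0 al01 l01) -(alg3' al lam).
  by rewrite le_eqVlt; apply/orP; left; apply/eqP; ring.
have P2n : 1 - lam * (1 - al) <= 1 - al ->
    X2 <= gamma1 (1 - al) lam `^ (1 - q^-1)
          * (c4 (1 - al) lam s * B + c3 (1 - al) lam s * A) `^ q^-1.
  move=> h.
  have rm : r <= m.
    have h2 : 0 <= (b - a) * ((1 - al) * lam - al) by apply: mulr_ge0; nra.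
    by rewrite /r /m; nra.
  apply: opt_powR => //; first by rewrite /gamma1; nra.
  move=> M M0.
  have [hG n1 n2] := key M M0.
  have [H _ _] := part_bound r am mb (lA b) fc hG n1 n2.
  have := H rm.
  rewrite (Ef_Gtl _ _ _ _ r ab s0 am mb (lA b)).
  rewrite um ur ub.
  move=> h'; rewrite /X2 ler_pdivrMr //; apply: le_trans h' _.
  rewrite -(alg4 A B s0 al01 l01) -(alg4' al lam).
  by rewrite le_eqVlt; apply/orP; left; apply/eqP; ring.
have Iid : (b - a) * I_f f lam al a b = Ef f a m p + Ef f m b r.
  rewrite /I_f /Ef.
  have -> : Rintegral lebesgue_measure `[a, b] f =
      \int[lebesgue_measure]_(x in `[a, m]) f x + \int[lebesgue_measure]_(x in `[m, b]) f x.
    by apply: int_split => //; rewrite am mb.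
  rewrite /m /p /r; fld.
split; last split.
- move=> /andP[h1 h2]; apply: (fin_comb ba Iid).
  + exact: P1s.
  + exact: P2s.
- move=> /andP[h1 h2]; apply: (fin_comb ba Iid).
  + by apply: P1s; lra.
  + exact: P2n.
- move=> /andP[h1 h2]; apply: (fin_comb ba Iid).
  + exact: P1n.
  + by apply: P2s; lra.
Qed.
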